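(* Let $\mathcal{H}=(V,E)$ be a hypergraph and $S\subseteq V$. If $\mathsf{red}(\mathcal{H}[S])$ admits a lower bound of $\Omega(n/p^{\epsilon})$, then $\mathcal{H}$ also admits the same lower bound $\Omega(n/p^{\epsilon})$.
   Context: Natural join queries are sets of relations (no repeated relation, distinct schemas); a query's hypergraph has the query's variables as vertices and the relation schemas as edges. $\mathcal{H}[S]$ is the hypergraph with vertex set $S$ and edges $\{S\cap e: e\in E, S\cap e\ne\emptyset\}$; $\mathsf{red}$ removes every edge $e$ contained in another edge $e'\ne e$. MPC model: $p$ machines, synchronous rounds of communication then local computation; the load is the maximum data received by any machine in any round. A tuple-based MPC algorithm transmits only (copies of) input tuples in their entirety, and a machine may output a tuple $t$ only if it has received $\pi_{\mathrm{vars}(R)}t$ for every relation $R$ of the query. A hypergraph $\mathcal{G}$ admits a lower bound of $\Omega(n/p^{\epsilon})$ if there exist join queries with hypergraph $\mathcal{G}$ and input size at most $n$ such that every tuple-based MPC algorithm (with a constant number of rounds) computing them on $p$ machines needs load $\Omega(n/p^{\epsilon})$. *)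

(* Defs.v *)
From HB Require Import structures.
From mathcomp Require Import all_boot.
From mathcomp Require Import finmap.
From Stdlib Require Import Reals.

Set Implicit Arguments.
Unset Strict Implicit.
Unset Printing Implicit Defensive.

Local Open Scope fset_scope.

Record hypergraph (V : finType) := Hypergraph {
  hvert : {set V};
  hedges : {set {set V}} }.

Definition induced (V : finType) (G : hypergraph V) (S : {set V}) : hypergraph V :=
  Hypergraph S [set S :&: e | e in hedges G & S :&: e != set0].

Definition red (V : finType) (G : hypergraph V) : hypergraph V :=
  Hypergraph (hvert G)
    [set e in hedges G | [forall e' in hedges G, (e' != e) ==> ~~ (e \subset e')]].

(* Tuples: assignments of (natural-number) values to variables; a tuple over
   the schema e is represented by its values on e, with value 0 elsewhere. *)
Definition tup (V : finType) := {ffun V -> nat}.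

Definition proj (V : finType) (e : {set V}) (t : tup V) : tup V :=
  [ffun v => if v \in e then t v else 0%N].

(* A join query with hypergraph G: one relation (finite set of tuples over
   schema e) for every edge e of G. *)
Definition instance (V : finType) := {set V} -> {fset tup V}.

Definition wf_instance (V : finType) (G : hypergraph V) (I : instance V) : Prop :=
  forall e, e \in hedges G -> forall t, t \in I e -> proj e t = t.

Definition input_size (V : finType) (G : hypergraph V) (I : instance V) : nat :=
  (\sum_(e in hedges G) #|` I e|)%N.

Definition join_result (V : finType) (G : hypergraph V) (I : instance V) (t : tup V) : Prop :=
  forall e, e \in hedges G -> proj e t \in I e.

(* Communication trace of a tuple-based MPC run with r rounds and p machines:
   tr k i = the set of (relation, tuple) messages received by machine i in round k. *)
Definition trace (V : finType) (r p : nat) := 'I_r -> 'I_p -> {fset ({set V} * tup V)}.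

Definition tuple_based (V : finType) (G : hypergraph V) (I : instance V) r p
  (tr : trace V r p) : Prop :=
  forall k i x, x \in tr k i -> x.1 \in hedges G /\ x.2 \in I x.1.

(* Every join result is output by some machine, which may output t only if it
   has received pi_e t for every relation e. *)
Definition computes (V : finType) (G : hypergraph V) (I : instance V) r p
  (tr : trace V r p) : Prop :=
  forall t, join_result G I t ->
    exists i : 'I_p, forall e, e \in hedges G -> exists k : 'I_r, (e, proj e t) \in tr k i.

Definition load (V : finType) r p (tr : trace V r p) : nat :=
  (\max_(k < r) \max_(i < p) #|` tr k i|)%N.

(* G admits a lower bound Omega(n / p^eps) for tuple-based MPC algorithms with
   a constant number r of rounds. *)
Definition admits_lb (V : finType) (G : hypergraph V) (eps : R) : Prop :=
  forall r : nat, exists c : R, (0 < c)%R /\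
    exists N : nat -> nat, forall p n : nat, (1 <= p)%N -> (N p <= n)%N ->
      exists I : instance V, wf_instance G I /\ (input_size G I <= n)%N /\
        forall tr : trace V r p, tuple_based G I tr -> computes G I tr ->
          (c * INR n / Rpower (INR p) eps <= INR (load tr))%R.

(* Main.v *)
Require Import Defs.
From mathcomp Require Import all_boot finmap.
From Stdlib Require Import Reals Lra.

Set Implicit Arguments.
Unset Strict Implicit.
Unset Printing Implicit Defensive.

Definition Ep (V : finType) (E : {set {set V}}) (S : {set V}) :=
  hedges (red (induced (Hypergraph [set: V] E) S)).

Lemma EpP (V : finType) (E : {set {set V}}) (S : {set V}) e' :
  e' \in Ep E S = (e' \in [set S :&: e | e in E & S :&: e != set0]) &&
   [forall e2 in [set S :&: e | e in E & S :&: e != set0], (e2 != e') ==> ~~ (e' \subset e2)].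
Proof. by rewrite /Ep /= inE. Qed.

Lemma Ep_sub (V : finType) (E : {set {set V}}) (S : {set V}) e' :
  e' \in Ep E S -> exists2 e, e \in E & e' = S :&: e.
Proof.
rewrite EpP => /andP [/imsetP [e]]; rewrite inE => /andP [He _] -> _.
by exists e.
Qed.

Lemma Ep_anti (V : finType) (E : {set {set V}}) (S : {set V}) e1 e2 :
  e1 \in Ep E S -> e2 \in Ep E S -> e1 \subset e2 -> e1 = e2.
Proof.
rewrite EpP => /andP [_ /forall_inP H1]; rewrite EpP => /andP [H2 _] Hs.
have := H1 _ H2; rewrite Hs /= implybF negbK => /eqP -> //.
Qed.

Lemma Ep_exists (V : finType) (E : {set {set V}}) (S : {set V}) e0 e :
  e0 \in Ep E S -> e \in E -> exists2 e', e' \in Ep E S & S :&: e \subset e'.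
Proof.
move=> He0 He.
have [->|Hne] := eqVneq (S :&: e) set0; first by exists e0; rewrite ?sub0set.
set EI := [set S :&: e | e in E & S :&: e != set0].
have HA : S :&: e \in EI by apply/imsetP; exists e; rewrite // inE He.
have P0 : (S :&: e \in EI) && (S :&: e \subset S :&: e) by rewrite HA subxx.
case: (@arg_maxnP _ (S :&: e) (fun B : {set V} => (B \in EI) && (S :&: e \subset B)) (fun B => #|B|) P0) => B /andP [HB HAB] Hmax.
exists B => //.
rewrite EpP HB /=; apply/forall_inP => e2 He2; apply/implyP => Hne2.
apply/negP => HB2.
have Hp : B \proper e2 by rewrite properEneq eq_sym Hne2.
have := Hmax e2; rewrite He2 (subset_trans HAB HB2) => /(_ isT) H; move: H; idtac.
move=> H; have H2 : (#|e2| <= #|B|)%N := H; by rewrite leqNgt (proper_card Hp) in H2.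
Qed.

From mathcomp Require Import zify.
Local Open Scope fset_scope.

Definition mkI (V : finType) (E : {set {set V}}) (S : {set V}) (I' : instance V) : instance V :=
  fun e => match [pick e' in Ep E S | S :&: e \subset e'] with
           | Some e' => (proj e) @` (I' e')
           | None => fset0 end.

Definition mktr (V : finType) (E : {set {set V}}) (S : {set V}) r p (tr : trace V r p) : trace V r p :=
  fun k i => (fun x : {set V} * tup V => (S :&: x.1, x.2)) @` [fset x in tr k i | S :&: x.1 \in Ep E S].

Lemma proj_proj (V : finType) (A B : {set V}) t : proj A (proj B t) = proj (A :&: B) t.
Proof. by apply/ffunP => v; rewrite !ffunE inE; case: (v \in A); case: (v \in B). Qed.

Lemma mkI_in (V : finType) (E : {set {set V}}) (S : {set V}) I' e t :
  wf_instance (red (induced (Hypergraph [set: V] E) S)) I' ->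
  S :&: e \in Ep E S -> t \in mkI E S I' e -> t \in I' (S :&: e).
Proof.
move=> Hwf HSe; rewrite /mkI; case: pickP => [e' /andP [He' Hsub] | _]; last by rewrite in_fset0.
have Heq := Ep_anti HSe He' Hsub; subst e'.
case/imfsetP => u /= Hu ->.
have Hu' := Hwf _ HSe _ Hu.
rewrite -Hu' proj_proj.
have -> : e :&: (S :&: e) = S :&: e by rewrite setIC -setIA setIid.
by rewrite Hu'.
Qed.

Theorem lemma5p3 (V : finType) (E : {set {set V}}) (S : {set V}) (eps : R) :
  admits_lb (red (induced (Hypergraph [set: V] E) S)) eps ->
  admits_lb (Hypergraph [set: V] E) eps.
Proof.
move=> Hlb r.
have Ppos : forall p : nat, (0 < Rpower (INR p) eps)%R by move=> p; rewrite /Rpower; apply: exp_pos.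
case: (set_0Vmem (Ep E S)) => [Epe | [e0 He0]].
  exfalso.
  case: (Hlb 0%N) => c [cpos [N HN]].
  case: (HN 1%N (N 1%N).+1 (leqnn 1) (leqnSn _)) => I' [_ [_ Htr]].
  have := Htr (fun _ _ => fset0).
  have Hl : load (fun (_ : 'I_0) (_ : 'I_1) => (fset0 : {fset {set V} * tup V})) = 0%N.
    by rewrite /load big_ord0.
  rewrite Hl.
  have H1 : tuple_based (red (induced (Hypergraph [set: V] E) S)) I'
              (fun (_ : 'I_0) (_ : 'I_1) => (fset0 : {fset {set V} * tup V})).
    by move=> k; case: k.
  have H2 : computes (red (induced (Hypergraph [set: V] E) S)) I'
              (fun (_ : 'I_0) (_ : 'I_1) => (fset0 : {fset {set V} * tup V})).
    move=> t _; exists ord0 => e He.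
    have : e \in Ep E S := He.
    by rewrite Epe inE.
  move=> /(_ H1 H2).
  pose n1 := (N 1).+1.
  have Hn : (0 < INR n1)%R by apply: lt_0_INR; apply/ltP.
  have := Ppos 1%N.
  set P := Rpower _ _ => HP H.
  have : (0 < c * INR n1 / P)%R.
    apply: Rdiv_lt_0_compat => //; exact: Rmult_lt_0_compat.
  change (c * INR n1 / P <= 0)%R in H; lra.
have [e1 He1 _] := Ep_sub He0.
set m := #|E|.
have mpos : (0 < m)%N by apply/card_gt0P; exists e1.
case: (Hlb r) => c [cpos [N HN]].
have Qpos : (0 < INR (2 * m))%R by apply: lt_0_INR; apply/ltP; lia.
exists (c / INR (2 * m))%R; split; first exact: Rdiv_lt_0_compat.
exists (fun p => m * (N p).+1)%N => p n Hp Hn.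
rewrite /= in Hn.
set n' := (n %/ m)%N.
have HS : ((N p).+1 <= n')%N by rewrite /n' leq_divRL // mulnC.
have Hn'N : (N p <= n')%N by lia.
have Hn'1 : (1 <= n')%N by lia.
have Hmn : (m * n' <= n)%N by rewrite mulnC /n' leq_trunc_div.
have Hdm := divn_eq n m.
have Hmod : (n %% m < m)%N by rewrite ltn_mod.
have Hn2 : (n <= 2 * m * n')%N.
  rewrite -/n' in Hdm.
  have : (m <= m * n')%N by rewrite leq_pmulr.
  nia.
case: (HN p n' Hp Hn'N) => I' [HwfI' [HsizeI' Htr']].
exists (mkI E S I'); split; [|split].
- move=> e He t; rewrite /mkI; case: pickP => [e' _ | _]; last by rewrite in_fset0.
  by case/imfsetP => u /= _ ->; rewrite proj_proj setIid.
- apply: leq_trans Hmn.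
  rewrite /input_size /= -sum_nat_const; apply: leq_sum => e He.
  rewrite /mkI; case: pickP => [e' /andP [He' _] | _]; last by rewrite cardfs0.
  apply: leq_trans (leq_imfset_card _ _ _) _.
  apply: leq_trans HsizeI'.
  rewrite /input_size (bigD1 e') //=; exact: leq_addr.
- move=> tr Htb Hcomp.
  have Htb' : tuple_based (red (induced (Hypergraph [set: V] E) S)) I' (mktr E S tr).
    move=> k i x /imfsetP [y /=]; rewrite inE => /andP [Hy HyE] ->.
    split => //=.
    have [Hy1 Hy2] := Htb k i y Hy.
    exact: mkI_in HwfI' HyE Hy2.
  have Hcomp' : computes (red (induced (Hypergraph [set: V] E) S)) I' (mktr E S tr).
    move=> t Hj.
    have Hj0 : join_result (Hypergraph [set: V] E) (mkI E S I') (proj S t).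
      move=> e He; rewrite /mkI; case: pickP => [e' /andP [He' Hsub] | Hnone].
        apply/imfsetP; exists (proj e' t); first exact: Hj e' He'.
        case: (Ep_sub He') Hsub => e2 _ -> Hsub.
        rewrite !proj_proj; congr proj; apply/setP => v; rewrite !inE.
        have := subsetP Hsub v; rewrite !inE.
        by case: (v \in S); case: (v \in e); case: (v \in e2) => //= ->.
      have [e' He' Hs] := Ep_exists He0 He.
      by have := Hnone e'; rewrite He' Hs.
    have [i Hi] := Hcomp _ Hj0.
    exists i => e' He'.
    have [e He Hee] := Ep_sub He'; subst e'.
    have [k Hk] := Hi e He.
    exists k; apply/imfsetP; exists (e, proj e (proj S t)).
      by rewrite !inE /= Hk /=; move: He'; rewrite EpP.
    by rewrite /= proj_proj setIC.
  have Hl := Htr' _ Htb' Hcomp'.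
  have Hload : (load (mktr E S tr) <= load tr)%N.
    apply/bigmax_leqP => k _; apply/bigmax_leqP => i _.
    apply: (leq_trans _ (leq_bigmax k)); apply: (leq_trans _ (leq_bigmax i)).
    apply: leq_trans (leq_imfset_card _ _ _) _; exact: (fsubset_leq_card (fset_sub (tr k i) _)).
  have HlR : (INR (load (mktr E S tr)) <= INR (load tr))%R by apply: le_INR; apply/leP.
  have HnR : (INR n <= INR (2 * m) * INR n')%R by rewrite -mult_INR; apply: le_INR; apply/leP.
  have := Ppos p; set P := Rpower _ _ => HP.
  set Q := INR (2 * m) in Qpos HnR *.
  apply: Rle_trans HlR; apply: Rle_trans Hl.
  have -> : (c / Q * INR n / P = (c / (Q * P)) * INR n)%R by field; lra.
  have -> : (c * INR n' / P = (c / (Q * P)) * (Q * INR n'))%R by field; lra.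
  apply: Rmult_le_compat_l => //.
  apply: Rlt_le; apply: Rdiv_lt_0_compat => //; exact: Rmult_lt_0_compat.
Qed.
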